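(* Fix integers $N\ge 2$ and $K\ge 1$. For any Boolean tensor $\mathcal{B}\in\{0,1\}^{N\times N\times K}$ with frontal slices $\mathbf{B}_1,\dots,\mathbf{B}_K$, and any $r\in\mathbb{N}^+$ with \[ r\ge\min\Big\{KN,\;2\sum_{k=1}^K\mathrm{rrank}(\mathbf{B}_k)\Big\},\] the set $\pi(\mathcal{M}^{\text{ComplEx}}_r)$ contains a ranking tensor consistent with $\mathcal{B}$.
   Context: A score-based model assigns a score $s_k(i,j)\in\mathbb{R}$ to each triple, $i,j\in\{1,\dots,N\}$, $k\in\{1,\dots,K\}$; its scoring tensor has frontal slices $\mathbf{S}_k$ with $[\mathbf{S}_k]_{ij}=s_k(i,j)$. For a real $N\times N$ matrix $\mathbf{S}$, $\pi(\mathbf{S})$ is the matrix of dense ranks: $\pi_{ij}(\mathbf{S})=1+$ (number of distinct values among entries of $\mathbf{S}$ strictly larger than $s_{ij}$). For tensors, $\pi$ acts slicewise; for a set $X$, $\pi(X)=\{\pi(x):x\in X\}$. ComplEx of size $r$: parameters $\mathbf{A}\in\mathbb{C}^{N\times r}$ (rows $\mathbf{a}_i$), $\mathbf{R}\in\mathbb{C}^{K\times r}$ (rows $\mathbf{r}_k$), score $\mathrm{Re}(\mathbf{a}_i^T\mathrm{diag}(\mathbf{r}_k)\overline{\mathbf{a}_j})$; $\mathcal{M}^{\text{ComplEx}}_r$ is the set of scoring tensors of such models. A ranking tensor $\mathcal{P}$ is consistent with $\mathcal{B}$ if for every $k$ and all $i,j,i',j'$: $b_{ijk}=1$ and $b_{i'j'k}=0$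 imply $p_{ijk}<p_{i'j'k}$. Rounding rank: $\mathrm{round}$ maps each entry $x$ of a real matrix to $1$ if $x\ge 1/2$ and to $0$ otherwise; for $\mathbf{B}\in\{0,1\}^{m\times n}$, $\mathrm{rrank}(\mathbf{B})=\min\{\mathrm{rank}(\mathbf{A}):\mathbf{A}\in\mathbb{R}^{m\times n},\ \mathrm{round}(\mathbf{A})=\mathbf{B}\}$. *)

(* Defs.v *)
From HB Require Import structures.
From mathcomp Require Import all_boot all_order all_algebra.
From mathcomp Require Import boolp reals.
From mathcomp Require Import complex.
Set Implicit Arguments. Unset Strict Implicit. Unset Printing Implicit Defensive.
Import Order.TTheory GRing.Theory Num.Theory.
Local Open Scope ring_scope.

Definition dense_rank (R : realType) (N : nat) (S : 'M[R]_N) (i j : 'I_N) : nat :=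
  (size (undup [seq S p.1 p.2 | p <- enum [set: 'I_N * 'I_N]
                 & S i j < S p.1 p.2])).+1.

Definition pi_tensor (R : realType) (N K : nat) (S : 'I_K -> 'M[R]_N)
  : 'I_K -> 'I_N -> 'I_N -> nat :=
  fun k i j => dense_rank (S k) i j.

(* Score tensor of a ComplEx model with entity embeddings A (rows a_i) and
   relation embeddings Rm (rows r_k):  s_k(i,j) = Re(a_i^T diag(r_k) conj(a_j)). *)
Definition complex_score (R : realType) (N K r : nat)
  (A : 'M[R[i]]_(N, r)) (Rm : 'M[R[i]]_(K, r)) : 'I_K -> 'M[R]_N :=
  fun k => \matrix_(i < N, j < N)
     complex.Re (\sum_(l < r) A i l * Rm k l * conjc (A j l)).

Definition consistent (N K : nat) (P : 'I_K -> 'I_N -> 'I_N -> nat)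
  (B : 'I_K -> 'M[bool]_N) : Prop :=
  forall (k : 'I_K) (i j i' j' : 'I_N),
    B k i j -> ~~ B k i' j' -> (P k i j < P k i' j')%N.

Definition round_mx (R : realType) (m n : nat) (A : 'M[R]_(m, n)) : 'M[bool]_(m, n) :=
  map_mx (fun x => (1 / 2 <= x)) A.

Definition rrank_pred (R : realType) (m n : nat) (B : 'M[bool]_(m, n)) : pred nat :=
  fun k => `[< exists A : 'M[R]_(m, n), \rank A = k /\ round_mx A = B >].

Lemma rrank_ex (R : realType) (m n : nat) (B : 'M[bool]_(m, n)) :
  exists k, rrank_pred R B k.
Proof.
exists (\rank (map_mx (fun b : bool => (b : nat)%:R : R) B)).
apply/asboolP; eexists; split; first reflexivity.
apply/matrixP => i j; rewrite !mxE.
case: (B i j) => /=.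
- by rewrite ler_pdivrMr // mul1r ler1n.
- by apply/negbTE; rewrite -ltNge divr_gt0.
Qed.

Definition rrank (R : realType) (m n : nat) (B : 'M[bool]_(m, n)) : nat :=
  ex_minn (rrank_ex R B).

(* Main.v *)
Require Import Defs.
From HB Require Import structures.
From mathcomp Require Import all_boot all_order all_algebra.
From mathcomp Require Import boolp reals.
From mathcomp Require Import complex.
From mathcomp Require Import sesquilinear spectral.
From mathcomp Require Import ring lra.
Import Order.TTheory GRing.Theory Num.Theory.
Local Open Scope ring_scope.

Set Implicit Arguments.
Unset Strict Implicit.
Section Helpers.
Variable R : realType.
Local Notation C := (R[i]).

Lemma dense_rank_lt (N : nat) (S : 'M[R]_N) i j i' j' :
  S i' j' < S i j -> (dense_rank S i j < dense_rank S i' j')%N.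
Proof.
move=> hlt; rewrite /dense_rank ltnS.
set L1 := [seq _ | _ <- _ & _]; set L2 := [seq _ | _ <- _ & _].
have -> : size (undup L1) = (size (S i j :: undup L1)).-1 by [].
have H : (size (S i j :: undup L1) <= size (undup L2))%N.
  apply: uniq_leq_size.
    rewrite /= undup_uniq andbT mem_undup.
    apply/negP => /mapP [p]; rewrite mem_filter => /andP [h _] e.
    by move: h; rewrite -e ltxx.
  move=> x; rewrite inE mem_undup => /orP [/eqP ->|].
    rewrite mem_undup; apply/mapP; exists (i, j) => //.
    by rewrite mem_filter hlt mem_enum inE.
  move=> /mapP [p]; rewrite mem_filter => /andP [h hp] ->.
  rewrite mem_undup; apply/mapP; exists p => //.
  by rewrite mem_filter hp andbT (lt_trans hlt h).
by rewrite /= in H *.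
Qed.

Lemma Re_sum (I : Type) (s : seq I) (P : pred I) (F : I -> C) :
  complex.Re (\sum_(x <- s | P x) F x) = \sum_(x <- s | P x) complex.Re (F x).
Proof.
by apply: (big_morph (@complex.Re R)) => // -[a b] [c d].
Qed.

Lemma ReD (x y : C) : complex.Re (x + y) = complex.Re x + complex.Re y.
Proof. by case: x; case: y. Qed.

Definition sc {N : nat} (s : nat) (a : 'I_N -> nat -> C) (rho : nat -> C) i j : R :=
  complex.Re (\sum_(0 <= l < s) a i l * rho l * conjc (a j l)).

Lemma concat N (n : nat -> nat) (ba : nat -> 'I_N -> nat -> C)
  (br : nat -> nat -> C) (X : nat -> 'I_N -> 'I_N -> R)
  (hb : forall k i j, sc (n k) (ba k) (br k) i j = X k i j) m :
  exists (a : 'I_N -> nat -> C) (rho : nat -> nat -> C), forall k i j,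
   sc (\sum_(k' < m) n k') a (rho k) i j = if (k < m)%N then X k i j else 0.
Proof.
elim: m => [|m [a [rho IH]]].
  exists (fun _ _ => 0), (fun _ _ => 0) => k i j.
  by rewrite big_ord0 /sc big_geq.
set s := (\sum_(k' < m) n k')%N.
exists (fun i l => if (l < s)%N then a i l else ba m i (l - s)%N).
exists (fun k l => if (l < s)%N then rho k l else if k == m then br m (l - s)%N else 0).
move=> k i j; rewrite big_ord_recr /= -/s /sc.
rewrite (@big_cat_nat _ _ _ s 0 (s + n m)) /= ?leq_addr // ReD.
have -> : complex.Re (\sum_(0 <= l < s)
   (if (l < s)%N then a i l else ba m i (l - s)%N) *
   (if (l < s)%N then rho k l else if k == m then br m (l - s)%N else 0) *
   conjc (if (l < s)%N then a j l else ba m j (l - s)%N)) = sc s a (rho k) i j.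
  rewrite /sc; congr complex.Re; apply: eq_big_nat => l /andP [_ ->] //.
rewrite IH -{1}(add0n s) big_addn addKn.
have -> : \sum_(0 <= l < n m)
   (if (l + s < s)%N then a i (l + s)%N else ba m i ((l + s)%N - s)%N) *
   (if (l + s < s)%N then rho k (l + s)%N else if k == m then br m ((l + s)%N - s)%N else 0) *
   conjc (if (l + s < s)%N then a j (l + s)%N else ba m j ((l + s)%N - s)%N) =
   if k == m then \sum_(0 <= l < n m) ba m i l * br m l * conjc (ba m j l) else 0.
  case: eqP => _; last by rewrite big1 // => l _; rewrite ltnNge leq_addl /= mulr0 mul0r.
  by apply: eq_bigr => l _; rewrite ltnNge leq_addl /= addnK.
have Re0 : complex.Re (0 : C) = 0 by [].
case: (ltngtP k m) => hkm.
- by rewrite Re0 addr0 (ltn_trans hkm (ltnSn m)).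
- by rewrite Re0 addr0 ltnNge hkm.
- by rewrite add0r -hkm ltnSn; exact: hb.
Qed.

Lemma assemble N K r (n : nat -> nat) (ba : nat -> 'I_N -> nat -> C)
  (br : nat -> nat -> C) (X : nat -> 'I_N -> 'I_N -> R)
  (hb : forall k i j, sc (n k) (ba k) (br k) i j = X k i j)
  (hs : (\sum_(k < K) n k <= r)%N) :
  exists (A : 'M[C]_(N, r)) (Rm : 'M[C]_(K, r)),
    forall (k : 'I_K) i j, complex_score A Rm k i j = X k i j.
Proof.
have [a [rho H]] := concat hb K.
set s := (\sum_(k < K) n k)%N in hs H.
exists (\matrix_(i, l) a i l), (\matrix_(k, l) if (l < s)%N then rho k l else 0).
move=> k i j; have := H k i j; rewrite ltn_ord => <-; rewrite /complex_score mxE /sc.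
congr complex.Re; rewrite big_mkord (big_ord_widen r (fun l => a i l * rho k l * conjc (a j l)) hs) [RHS]big_mkcond.
apply: eq_bigr => l _; rewrite !mxE; case: ifP => _ //.
by rewrite mulr0 mul0r.
Qed.

Lemma calc (a b c d : R) :
  complex.Re ((Complex a b) * (Complex (-1/2) (1/2)) * conjc (Complex c d)) +
  complex.Re ((Complex (a+b) 0) * (Complex (1/2) 0) * conjc (Complex (c+d) 0)) = a * d.
Proof. by rewrite /=; field. Qed.

Lemma sum_pairs (f : nat -> C) p :
  \sum_(0 <= l < 2 * p) f l = \sum_(0 <= t < p) (f (2 * t)%N + f (2 * t).+1).
Proof.
elim: p => [|p IH]; first by rewrite !big_geq.
have -> : (2 * p.+1 = (2 * p).+2)%N by rewrite mulnS.
by rewrite !big_nat_recr //= IH addrA.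
Qed.

Definition extc {N p} (U : 'M[R]_(N, p)) (i : 'I_N) (t : nat) : R :=
  if insub t is Some o then U i o else 0.
Definition extr {N p} (V : 'M[R]_(p, N)) (t : nat) (j : 'I_N) : R :=
  if insub t is Some o then V o j else 0.

Definition b2a {N} (Y : 'M[R]_N) (i : 'I_N) (l : nat) : C :=
  let u := extc (col_base Y) in let v := extr (row_base Y) in
  if odd l then Complex (u i l./2 + v l./2 i) 0 else Complex (u i l./2) (v l./2 i).
Definition b2r (l : nat) : C :=
  if odd l then Complex (1/2) 0 else Complex (-1/2) (1/2).

Lemma block2 N (Y : 'M[R]_N) i j : sc (2 * \rank Y) (b2a Y) b2r i j = Y i j.
Proof.
rewrite /sc sum_pairs Re_sum.
apply: etrans (_ : _ = \sum_(0 <= t < \rank Y)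
   extc (col_base Y) i t * extr (row_base Y) t j) _.
  apply: eq_bigr => t _.
  rewrite ReD /b2a /b2r mul2n /= !odd_double /= uphalf_double half_double.
  by field.
have := mulmx_base Y => /matrixP/(_ i j) <-.
rewrite mxE big_mkord; apply: eq_bigr => t _.
by rewrite /extc /extr valK.
Qed.

Definition Xb {N} (M : 'M[bool]_N) : 'M[R]_N := \matrix_(i, j) ((M i j : nat)%:R).
Definition Wm {N} (M : 'M[bool]_N) : 'M[C]_N :=
  \matrix_(i, j) (Complex (Xb M i j) (Xb M j i)).

Lemma cext (x y : C) : complex.Re x = complex.Re y -> complex.Im x = complex.Im y -> x = y.
Proof. by case: x; case: y => ? ? ? ? /= -> ->. Qed.

Lemma cW (a b c d : R) :
  Complex a b * conjc (Complex c d) = conjc (Complex b a) * Complex d c.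
Proof. by apply: cext; rewrite /=; ring. Qed.

Lemma Wm_normal N (M : 'M[bool]_N) : Wm M \is normalmx.
Proof.
apply/eqP/matrixP => i j; rewrite !mxE; apply: eq_bigr => l _; rewrite !mxE.
exact: cW.
Qed.

Definition b1a {N} (M : 'M[bool]_N) (i : 'I_N) (l : nat) : C :=
  if insub l is Some o then conjc (spectralmx (Wm M) o i) else 0.
Definition b1r {N} (M : 'M[bool]_N) (l : nat) : C :=
  if insub l is Some o then spectral_diag (Wm M) 0 o else 0.

Lemma block1 N (M : 'M[bool]_N) i j : sc N (b1a M) (b1r M) i j = Xb M i j.
Proof.
have hW := (orthomx_spectralP (Wm_normal M)).
rewrite invmx_unitary ?spectral_unitarymx // in hW.
have e : complex.Re (Wm M i j) = Xb M i j by rewrite mxE.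
rewrite -e hW /sc mxE big_mkord; congr complex.Re; apply: eq_bigr => o _.
by rewrite /b1a /b1r valK mul_mx_diag !mxE conjcK.
Qed.

End Helpers.

Definition Bn N K (B : 'I_K -> 'M[bool]_N) (k : nat) : 'M[bool]_N :=
  if insub k is Some o then B o else const_mx false.

Lemma BnE N K (B : 'I_K -> 'M[bool]_N) (k : 'I_K) : Bn B k = B k.
Proof. by rewrite /Bn valK. Qed.

Theorem theorem12 (R : realType) (N K : nat) (hN : (2 <= N)%N) (hK : (1 <= K)%N)
  (B : 'I_K -> 'M[bool]_N) (r : nat) (hr : (0 < r)%N)
  (hrk : (minn (K * N) (2 * \sum_(k < K) rrank R (B k)) <= r)%N) :
  exists (A : 'M[R[i]]_(N, r)) (Rm : 'M[R[i]]_(K, r)),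
    consistent (pi_tensor (complex_score A Rm)) B.
Proof.
move: hrk; rewrite geq_min => /orP [h1|h2].
  have hs : (\sum_(k < K) (fun _ => N) k <= r)%N by rewrite sum_nat_const card_ord.
  have [A [Rm H]] := assemble (fun k (i j : 'I_N) => @block1 R N (Bn B k) i j) hs.
  exists A, Rm => k0 i j i' j' h h'.
  apply: dense_rank_lt; rewrite !H /Xb !mxE !BnE (negbTE h') h /=; exact: ltr01.
have hex : forall k : nat, exists Y : 'M[R]_N,
    \rank Y = rrank R (Bn B k) /\ round_mx Y = Bn B k.
  move=> k; rewrite /rrank; case: ex_minnP => m /asboolP [Y [hY1 hY2]] _.
  by exists Y.
have [Yf hYf] := choice hex.
have hs : (\sum_(k < K) (fun k => 2 * \rank (Yf k)) k <= r)%N.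
  rewrite -big_distrr /=; apply: leq_trans h2; rewrite leq_mul2l; apply/orP; right.
  by apply: leq_sum => k _; rewrite (proj1 (hYf k)) BnE.
have [A [Rm H]] := assemble (fun k (i j : 'I_N) => @block2 R N (Yf k) i j) hs.
exists A, Rm => k0 i j i' j' h h'.
apply: dense_rank_lt; rewrite !H.
have := proj2 (hYf k0); rewrite BnE => /matrixP hM.
move: (hM i j) (hM i' j'); rewrite !mxE h (negbTE h') => hij /negbT.
rewrite -ltNge => hij'; exact: lt_le_trans hij' hij.
Qed.
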